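(* Let $\mathsf{\Omega}$ be a first-quantized BRST operator of a linear Lagrangian gauge system (odd, of ghost number $1$, nilpotent, and symplectic). For every ghost number $g$, the BRST state cohomology $H^g(\mathsf{\Omega})$ is a module, with the action $[A]\cdot[\phi]=[A\phi]$, of any Lie subalgebra of $H^{0}_{\rm sym}([\mathsf{\Omega},\cdot])$, and thus of any subalgebra of the Lie algebra of equivalence classes of linear variational symmetries.
   Context: Wave functions $\phi=e_\alpha\phi^\alpha(x)$ take values in a superspace with basis elements $e_\alpha$ graded by ghost number and parity, equipped with a constant nondegenerate odd antisymplectic form $\omega(\phi,\chi)=\int d^dx\,\omega_{\alpha\beta}\phi^\alpha\chi^\beta$, $\omega(\phi,\chi)=-(-1)^{|\phi||\chi|}\omega(\chi,\phi)$. A linear differential operator $A$ is symplectic if $\omega(A\phi,\chi)+(-1)^{|A||\phi|}\omega(\phi,A\chi)=0$. $\mathsf{\Omega}$ is odd, of ghost number $1$, symplectic, with $\mathsf{\Omega}^2=0$. $H^g(\mathsf{\Omega})$ is the space of ghost-number-$g$ wave functions $\phi$ with $\mathsf{\Omega}\phi=0$ modulo those of the form $\mathsf{\Omega}\chi$. $H^0_{\rm sym}([\mathsf{\Omega},\cdot])$ is the space of ghost-number-$0$ symplectic operators $K$ with $[\mathsf{\Omega},K]=0$ modulo $[\mathsf{\Omega},T]$ with $T$ symplectic of ghost number $-1$; with the commutator it is a Lie algebra isomorphic to the Lie algebra of equivalence classes of linear variational symmetries. *)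

(* Defs.v *)
From HB Require Import structures.
From mathcomp Require Import all_boot all_order all_algebra.
Set Implicit Arguments. Unset Strict Implicit. Unset Printing Implicit Defensive.
Import GRing.Theory.
Local Open Scope ring_scope.

Section BRST.
Variables (K : fieldType) (V : lmodType K).

Definition ksign (b : bool) : K := (-1) ^+ b.

Definition subspace (S : V -> Prop) :=
  S 0 /\ forall (a : K) u v, S u -> S v -> S (a *: u + v).

(* G g v : v is a wave function of ghost number g;
   P p v : v is homogeneous of parity p (true = odd). *)
Definition grading (G : int -> V -> Prop) (P : bool -> V -> Prop) :=
  (forall g, subspace (G g)) /\ (forall p, subspace (P p)).

Definition lin_op (A : V -> V) := forall (a : K) u v, A (a *: u + v) = a *: A u + A v.

Definition op_deg (G : int -> V -> Prop) (P : bool -> V -> Prop)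
  (n : int) (p : bool) (A : V -> V) :=
  (forall g v, G g v -> G (g + n) (A v)) /\ (forall q v, P q v -> P (q (+) p) (A v)).

Definition scomm (pA pB : bool) (A B : V -> V) : V -> V :=
  fun v => A (B v) - ksign (pA && pB) *: B (A v).

Definition odd_antisymplectic_form (P : bool -> V -> Prop) (om : V -> V -> K) :=
  [/\ (forall (a : K) u v w, om (a *: u + v) w = a * om u w + om v w),
      (forall (a : K) u v w, om w (a *: u + v) = a * om w u + om w v),
      (forall u, (forall v, om u v = 0) -> u = 0),
      (forall p q u v, P p u -> P q v -> om u v = - (ksign (p && q) * om v u)) &
      (forall p u v, P p u -> P p v -> om u v = 0)].

Definition symplectic (P : bool -> V -> Prop) (om : V -> V -> K) (pA : bool)
  (A : V -> V) :=
  forall p phi chi, P p phi -> om (A phi) chi + ksign (pA && p) * om phi (A chi) = 0.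

(* Dop : the class of linear differential operators (abstract): linear maps,
   closed under composition and linear combinations. *)
Definition diffop_class (Dop : (V -> V) -> Prop) :=
  [/\ (forall A, Dop A -> lin_op A),
      (forall A B, Dop A -> Dop B -> Dop (fun v => A (B v))) &
      (forall (a : K) A B, Dop A -> Dop B -> Dop (fun v => a *: A v + B v))].

Definition brst_operator G P om Dop (Om : V -> V) :=
  [/\ Dop Om, op_deg G P 1 true Om, symplectic P om true Om &
      forall v, Om (Om v) = 0].

(* representatives of H^0_sym([Om, .]) *)
Definition sym_cocycle G P om Dop (Om : V -> V) (A : V -> V) :=
  [/\ Dop A, op_deg G P 0 false A, symplectic P om false A &
      forall v, scomm true false Om A v = 0].

Definition sym_coboundary G P om Dop (Om : V -> V) (A : V -> V) :=
  exists T, [/\ Dop T, op_deg G P (-1) true T, symplectic P om true T &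
                forall v, A v = scomm true true Om T v].

(* A Lie subalgebra of H^0_sym, described by its preimage L in the space of
   cocycles: L contains all coboundaries, is a linear subspace, and is
   closed under the commutator. *)
Definition lie_subalgebra G P om Dop Om (L : (V -> V) -> Prop) :=
  [/\ (forall A, L A -> sym_cocycle G P om Dop Om A),
      (forall A, sym_coboundary G P om Dop Om A -> L A),
      (forall (a : K) A B, L A -> L B -> L (fun v => a *: A v + B v)) &
      (forall A B, L A -> L B -> L (scomm false false A B))].

Definition bclosed (G : int -> V -> Prop) (Om : V -> V) (g : int) (phi : V) :=
  G g phi /\ Om phi = 0.

Definition bexact (G : int -> V -> Prop) (Om : V -> V) (g : int) (phi : V) :=
  G g phi /\ exists chi, phi = Om chi.

Definition cohomologous G Om g (phi psi : V) :=
  [/\ bclosed G Om g phi, bclosed G Om g psi & bexact G Om g (phi - psi)].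

End BRST.

(* Main.v *)
Require Import Defs.
From mathcomp Require Import all_boot all_order all_algebra.
Import GRing.Theory.
Local Open Scope ring_scope.

Section H.
Variables (K : fieldType) (V : lmodType K).

Lemma lin0 (A : V -> V) : lin_op A -> A 0 = 0.
Proof. move=> h; have := h (-1) 0 0; rewrite scaler0 add0r scaleN1r addNr //. Qed.

Lemma linB (A : V -> V) x y : lin_op A -> A (x - y) = A x - A y.
Proof. move=> h; have := h (-1) y x; rewrite !scaleN1r addrC => ->; by rewrite addrC. Qed.

Lemma subB (S : V -> Prop) x y : subspace S -> S x -> S y -> S (x - y).
Proof. move=> [_ h] hx hy; have := h (-1) y x hy hx; by rewrite scaleN1r addrC. Qed.

Lemma coh_refl G (Om : V -> V) g x : lin_op Om -> subspace (G g) ->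
  bclosed G Om g x -> cohomologous G Om g x x.
Proof.
move=> hO [h0 _] hx; split=> //; split; first by rewrite subrr.
by exists 0; rewrite subrr lin0.
Qed.
End H.

Theorem proposition3 (K : fieldType) (V : lmodType K)
  (G : int -> V -> Prop) (P : bool -> V -> Prop) (om : V -> V -> K)
  (Dop : (V -> V) -> Prop) (Om : V -> V) (L : (V -> V) -> Prop) :
  grading G P ->
  odd_antisymplectic_form P om ->
  diffop_class Dop ->
  brst_operator G P om Dop Om ->
  lie_subalgebra G P om Dop Om L ->
  forall g : int,
  (* the action [A].[phi] = [A phi] is well defined on H^g(Om) *)
  [/\ (forall A phi, L A -> bclosed G Om g phi -> bclosed G Om g (A phi)),
      (forall A phi psi, L A -> cohomologous G Om g phi psi ->
          cohomologous G Om g (A phi) (A psi)),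
      (forall A B phi, L A -> L B ->
          sym_coboundary G P om Dop Om (fun v => A v - B v) ->
          bclosed G Om g phi -> cohomologous G Om g (A phi) (B phi)),
  (* it is bilinear *)
      (forall (a : K) A B phi psi, L A -> L B -> bclosed G Om g phi ->
          bclosed G Om g psi ->
          cohomologous G Om g ((fun v => a *: A v + B v) phi) (a *: A phi + B phi)
          /\ cohomologous G Om g (A (a *: phi + psi)) (a *: A phi + A psi)) &
  (* and it is a Lie algebra action: [[A],[B]].x = [A].([B].x) - [B].([A].x) *)
      (forall A B phi, L A -> L B -> bclosed G Om g phi ->
          cohomologous G Om g (scomm false false A B phi) (A (B phi) - B (A phi)))].
Proof.
move=> [hG hP] _ [hlin _ _] [hDO _ _ hOO] [hLc hLb hLl hLs] g.
have linO := hlin _ hDO.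
have ks0 : ksign K false = 1 by rewrite /ksign expr0.
have ks1 : ksign K true = -1 by rewrite /ksign expr1.
have cc : forall A, L A -> [/\ lin_op A, forall g v, G g v -> G g (A v) &
                         forall v, Om (A v) = A (Om v)].
  move=> A /hLc [hD [hg _] _ hc]; split; first exact: hlin.
    by move=> g' v /hg; rewrite addr0.
  by move=> v; have := hc v; rewrite /scomm ks0 scale1r => /eqP; rewrite subr_eq0 => /eqP.
have cl : forall A phi, L A -> bclosed G Om g phi -> bclosed G Om g (A phi).
  move=> A phi /cc [hl hg hc] [h1 h2]; split; first exact: hg.
  by rewrite hc h2 lin0.
split=> //.
- move=> A phi psi hA [c1 c2 [e1 [chi e2]]]; have [hl hg hc] := cc _ hA.
  split; try exact: cl; split; first by rewrite -linB //; exact: hg.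
  by exists (A chi); rewrite hc -e2 linB.
- move=> A B phi hA hB [T [hT _ _ hTe]] hp.
  split; try exact: cl; split.
    by apply: subB; [exact: hG | case: (cl _ _ hA hp) | case: (cl _ _ hB hp)].
  exists (T phi); rewrite hTe /scomm ks1 scaleN1r opprK.
  by case: hp => _ ->; rewrite (@lin0 _ _ _ (hlin _ hT)) addr0.
- move=> a A B phi psi hA hB hp hq; split.
    apply: (@coh_refl _ _ _ _ _ _ linO (hG g)); exact: (cl _ _ (hLl a _ _ hA hB)).
  have [hl _ _] := cc _ hA; rewrite hl; apply: (@coh_refl _ _ _ _ _ _ linO (hG g)).
  rewrite -hl; apply: (cl _ _ hA); split.
    by case: (hG g) => _ h; apply: h; [case: hp | case: hq].
  by rewrite linO; case: hp => _ ->; case: hq => _ ->; rewrite scaler0 addr0.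
- move=> A B phi hA hB hp.
  have -> : scomm false false A B phi = A (B phi) - B (A phi).
    by rewrite /scomm ks0 scale1r.
  apply: (@coh_refl _ _ _ _ _ _ linO (hG g)).
  have := cl _ _ (hLs _ _ hA hB) hp; by rewrite /scomm ks0 scale1r.
Qed.
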